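(* Let $p\ge1$ and $n\ge p$ be integers, and let $\Lambda\in\mathbb R$. The real vector space of even functions $z\in C^{2n}[-1,1]$ satisfying - $L^{2n}(\Lambda)z=0$ on $[-1,1]$, and - $z^{(j)}(\pm1)=0$ for $j=0,\dots,n-1$, has dimension at most $1$. Equivalently, two linearly independent even eigenfunctions of order $n$ have different eigenvalues.
   Context: Fix an integer $p\ge1$. For an integer $k\ge p$ and real $\Lambda$, the differential operator on $[-1,1]$ is $$L^{2k}(\Lambda)=(-1)^k\frac{d^{2k}}{dx^{2k}}-\Lambda(-1)^{k-p}\frac{d^{2k-2p}}{dx^{2k-2p}}.$$ An eigenfunction of order $k$ with eigenvalue $\Lambda$ is a nonzero real $z\in C^{2k}[-1,1]$ such that: - $L^{2k}(\Lambda)z=0$ on $[-1,1]$, and - $z^{(j)}(\pm1)=0$ for $j<k$. *)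

(* Defs.v *)
From Stdlib Require Import Reals Lra Lia.
Open Scope R_scope.

Definition inI (x : R) : Prop := -1 <= x <= 1.

Definition deriv_on_I (f f' : R -> R) : Prop :=
  forall x, inI x ->
    forall eps, 0 < eps -> exists delta, 0 < delta /\
      forall h, h <> 0 -> Rabs h < delta -> inI (x + h) ->
        Rabs ((f (x + h) - f x) / h - f' x) < eps.

Definition cont_on_I (f : R -> R) : Prop :=
  forall x, inI x ->
    forall eps, 0 < eps -> exists delta, 0 < delta /\
      forall y, inI y -> Rabs (y - x) < delta -> Rabs (f y - f x) < eps.

(* d is a sequence of successive derivatives of z of orders 0..m on [-1,1],
   with the m-th derivative continuous: this witnesses z ∈ C^m[-1,1]. *)
Definition derivs_on_I (m : nat) (z : R -> R) (d : nat -> R -> R) : Prop :=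
  (forall x, inI x -> d 0%nat x = z x) /\
  (forall j, (j < m)%nat -> deriv_on_I (d j) (d (S j))) /\
  cont_on_I (d m).

Definition even_eigen_sol (p n : nat) (Lam : R) (z : R -> R) : Prop :=
  (forall x, inI x -> z (- x) = z x) /\
  exists d : nat -> R -> R,
    derivs_on_I (2 * n) z d /\
    (forall x, inI x ->
       (-1) ^ n * d (2 * n)%nat x
       - Lam * (-1) ^ (n - p) * d (2 * n - 2 * p)%nat x = 0) /\
    (forall j, (j < n)%nat -> d j 1 = 0 /\ d j (-1) = 0).

(* Main.v *)
Require Import Defs.
From Stdlib Require Import Reals Lra Lia.
Open Scope R_scope.

Lemma D_in_ext f d e D x : D_in f d D x -> d x = e x -> D_in f e D x.
Proof. unfold D_in. intros H He. rewrite <- He. exact H. Qed.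

Lemma deriv_to_Din f f' : deriv_on_I f f' -> forall x, inI x -> D_in f f' inI x.
Proof.
  intros H x Hx. unfold D_in, limit1_in, limit_in. intros eps He.
  destruct (H x Hx eps He) as [del [Hd Hh]]. exists del. split; [lra|].
  intros y [[Hy Hne] Hdist]. simpl in *. unfold R_dist in *.
  specialize (Hh (y - x)). replace (x + (y - x)) with y in Hh by ring.
  apply Hh; auto. intro; apply Hne; lra.
Qed.

Lemma Din_cont f d x : D_in f d inI x -> forall eps, eps > 0 ->
  exists del, del > 0 /\ forall y, inI y -> Rabs (y - x) < del -> Rabs (f y - f x) < eps.
Proof.
  intros H. apply cont_deriv in H. unfold continue_in, limit1_in, limit_in in H.
  intros eps He. destruct (H eps He) as [alp [Ha Hf]]. exists alp. split; auto.
  intros y Hy Hyx. destruct (Req_dec y x) as [->|Hne].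
  - replace (f x - f x) with 0 by ring. rewrite Rabs_R0. lra.
  - apply (Hf y). split; [split; auto|]. exact Hyx.
Qed.

Lemma Din_dpl f d x : D_in f d inI x -> -1 < x < 1 -> derivable_pt_lim f x (d x).
Proof.
  intros H Hx eps He. destruct (H eps He) as [alp [Ha Hf]].
  assert (Hp : 0 < Rmin alp (Rmin (1 - x) (x + 1))).
  { apply Rmin_pos; [lra|apply Rmin_pos; lra]. }
  exists (mkposreal _ Hp). intros h Hh0 Hh. simpl in Hh.
  pose proof (Rmin_l alp (Rmin (1 - x) (x + 1))).
  pose proof (Rmin_r alp (Rmin (1 - x) (x + 1))).
  pose proof (Rmin_l (1 - x) (x + 1)). pose proof (Rmin_r (1 - x) (x + 1)).
  apply Rabs_def2 in Hh. specialize (Hf (x + h)). simpl in Hf; unfold R_dist in Hf.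
  replace (x + h - x) with h in Hf by ring. apply Hf.
  split; [split|].
  - unfold inI; lra.
  - intro; apply Hh0; lra.
  - apply Rabs_def1; lra.
Qed.

Lemma mono_int f d a b : -1 < a -> a < b -> b < 1 ->
  (forall c, -1 < c < 1 -> D_in f d inI c) -> (forall c, inI c -> d c <= 0) -> f b <= f a.
Proof.
  intros Ha Hab Hb HD Hd.
  destruct (MVT_cor2 f d a b Hab) as [c [Hc Hc2]].
  { intros c Hc. apply Din_dpl; [apply HD|]; lra. }
  assert (d c <= 0) by (apply Hd; unfold inI; lra). nra.
Qed.

Lemma mono f d : (forall c, inI c -> D_in f d inI c) -> (forall c, inI c -> d c <= 0) ->
  forall x y, inI x -> inI y -> x <= y -> f y <= f x.
Proof.
  intros HD Hd x y Hx Hy Hxy.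
  destruct (Req_dec x y) as [->|Hne]; [lra|].
  destruct (Rle_lt_dec (f y) (f x)) as [|Hlt]; [auto|exfalso].
  set (eps := (f y - f x) / 3).
  assert (He : eps > 0) by (unfold eps; lra).
  destruct (Din_cont f d x (HD x Hx) eps He) as [d1 [Hd1 H1]].
  destruct (Din_cont f d y (HD y Hy) eps He) as [d2 [Hd2 H2]].
  set (t := Rmin (Rmin d1 d2) ((y - x) / 2) / 2).
  assert (Hm : 0 < Rmin (Rmin d1 d2) ((y - x) / 2)).
  { apply Rmin_pos; [apply Rmin_pos|]; lra. }
  pose proof (Rmin_l (Rmin d1 d2) ((y - x) / 2)).
  pose proof (Rmin_r (Rmin d1 d2) ((y - x) / 2)).
  pose proof (Rmin_l d1 d2). pose proof (Rmin_r d1 d2).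
  unfold inI in *.
  assert (HI : f (y - t) <= f (x + t)).
  { apply (mono_int f d); try (unfold t; lra).
    - intros c Hc; apply HD; unfold inI; lra.
    - exact Hd. }
  assert (A1 : Rabs (f (x + t) - f x) < eps).
  { apply H1; [unfold inI, t; lra|]. replace (x + t - x) with t by ring.
    rewrite Rabs_right; unfold t; lra. }
  assert (A2 : Rabs (f (y - t) - f y) < eps).
  { apply H2; [unfold inI, t; lra|]. replace (y - t - y) with (- t) by ring.
    rewrite Rabs_Ropp, Rabs_right; unfold t; lra. }
  apply Rabs_def2 in A1. apply Rabs_def2 in A2. unfold eps in *. lra.
Qed.

Lemma small_zero r : (forall eps, 0 < eps -> Rabs r < eps) -> r = 0.
Proof.
  intros H. destruct (Req_dec r 0) as [|Hn]; auto.
  specialize (H (Rabs r) (Rabs_pos_lt _ Hn)). lra.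
Qed.

Lemma Din_zero f d x : inI x -> (forall y, inI y -> f y = f x) -> D_in f d inI x -> d x = 0.
Proof.
  intros Hx Hc H. apply small_zero. intros eps He.
  destruct (H eps He) as [alp [Ha Hf]].
  assert (Hm : 0 < Rmin alp 1) by (apply Rmin_pos; lra).
  pose proof (Rmin_l alp 1). pose proof (Rmin_r alp 1).
  unfold inI in Hx.
  set (y := if Rle_dec x 0 then x + Rmin alp 1 / 2 else x - Rmin alp 1 / 2).
  assert (Hy : inI y /\ y <> x /\ Rabs (y - x) < alp).
  { unfold y, inI; destruct (Rle_dec x 0).
    - split; [lra|split; [lra|]]. replace (x + Rmin alp 1 / 2 - x) with (Rmin alp 1 / 2) by ring.
      rewrite Rabs_right; lra.
    - split; [lra|split; [lra|]]. replace (x - Rmin alp 1 / 2 - x) with (- (Rmin alp 1 / 2)) by ring.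
      rewrite Rabs_Ropp, Rabs_right; lra. }
  destruct Hy as [Hy1 [Hy2 Hy3]].
  specialize (Hf y (conj (conj Hy1 (not_eq_sym Hy2)) Hy3)). simpl in Hf. unfold R_dist in Hf.
  rewrite (Hc y Hy1) in Hf. replace ((f x - f x) / (y - x)) with 0 in Hf.
  - rewrite Rabs_minus_sym, Rminus_0_r in Hf. exact Hf.
  - field. lra.
Qed.

Lemma zero_deriv f d : (forall c, inI c -> D_in f d inI c) -> (forall c, inI c -> d c = 0) ->
  f 1 = 0 -> forall x, inI x -> f x = 0.
Proof.
  intros HD Hd H1 x Hx.
  assert (I1 : inI 1) by (unfold inI; lra).
  assert (A : f 1 <= f x).
  { apply (mono f d); auto; [intros; rewrite Hd; auto; lra| unfold inI in Hx; lra]. }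
  assert (B : - f 1 <= - f x).
  { apply (mono (fun y => - f y) (fun y => - d y)); auto.
    - intros; apply Dopp; auto.
    - intros; rewrite Hd; auto; lra.
    - unfold inI in Hx; lra. }
  lra.
Qed.

Fixpoint sumk (F : nat -> R) (k : nat) : R :=
  match k with O => 0 | S k' => sumk F k' + F k' end.

Lemma sumk_ext F G k : (forall i, (i < k)%nat -> F i = G i) -> sumk F k = sumk G k.
Proof. induction k; simpl; intros H; auto. rewrite IHk by (intros; apply H; lia). rewrite H by lia. auto. Qed.

Lemma sumk_tele (a : nat -> R) k : sumk (fun i => a i - a (S i)) k = a 0%nat - a k.
Proof. induction k; simpl; [ring|rewrite IHk; ring]. Qed.

Lemma sumk_zero k : sumk (fun _ => 0) k = 0.
Proof. induction k; simpl; [ring|rewrite IHk; ring]. Qed.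

Lemma D_sumk (F F' : nat -> R -> R) k x :
  (forall i, (i < k)%nat -> D_in (F i) (F' i) inI x) ->
  D_in (fun y => sumk (fun i => F i y) k) (fun y => sumk (fun i => F' i y) k) inI x.
Proof.
  induction k; simpl; intros H.
  - apply Dconst.
  - apply Dadd; [apply IHk; intros; apply H; lia| apply H; lia].
Qed.

Definition gg (f : nat -> R -> R) (c0 : R) (i : nat) (y : R) :=
  y * f (S i) y + (INR i + c0) * f i y.

Definition TT (f : nat -> R -> R) (c0 : R) (k : nat) (y : R) :=
  sumk (fun i => (-1) ^ i * f (2 * k - 1 - i)%nat y * gg f c0 i y) k
  + (-1) ^ k * / 2 * (y * (f k y * f k y)).

Lemma gg_deriv f c0 i x : D_in (f i) (f (S i)) inI x -> D_in (f (S i)) (f (S (S i))) inI x ->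
  D_in (gg f c0 i) (gg f c0 (S i)) inI x.
Proof.
  intros H1 H2. unfold gg. eapply D_in_ext.
  - apply Dadd; [apply Dmult; [apply Dx| exact H2] | apply Dmult_const; exact H1].
  - cbv beta. rewrite S_INR. ring.
Qed.

Lemma TT_deriv f c0 k x :
  (forall j, (j < 2 * k)%nat -> D_in (f j) (f (S j)) inI x) ->
  D_in (f k) (f (S k)) inI x ->
  D_in (TT f c0 k)
    (fun y => f (2 * k)%nat y * gg f c0 0 y - (-1) ^ k * (INR k + c0 - / 2) * (f k y * f k y)) inI x.
Proof.
  intros Hf Hk. unfold TT. eapply D_in_ext.
  - apply Dadd.
    + apply D_sumk. intros i Hi. apply Dmult; [apply Dmult_const; apply Hf; lia|].
      apply gg_deriv; [apply Hf; lia|].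
      destruct (Nat.eq_dec (S i) k) as [<-|]; [exact Hk| apply Hf; lia].
    + apply Dmult_const. apply Dmult; [apply Dx|]. apply Dmult; exact Hk.
  - cbv beta.
    set (a := fun i => (-1) ^ i * f (2 * k - i)%nat x * gg f c0 i x).
    rewrite (sumk_ext _ (fun i => a i - a (S i))).
    + rewrite sumk_tele. unfold a. rewrite Nat.sub_0_r.
      replace (2 * k - k)%nat with k by lia. unfold gg. simpl pow. field.
    + intros i Hi. unfold a.
      replace (S (2 * k - 1 - i)) with (2 * k - i)%nat by lia.
      replace (2 * k - S i)%nat with (2 * k - 1 - i)%nat by lia.
      simpl pow. ring.
Qed.

Lemma TT_bd f c0 k s : (forall j, (j <= k)%nat -> f j s = 0) -> TT f c0 k s = 0.
Proof.
  intros H. unfold TT. rewrite (sumk_ext _ (fun _ => 0)).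
  - rewrite sumk_zero, (H k) by lia. ring.
  - intros i Hi. unfold gg. rewrite (H i), (H (S i)) by lia. ring.
Qed.

Lemma sq_m1 n : (-1) ^ n * (-1) ^ n = 1.
Proof. induction n; simpl; [ring|]. replace (-1 * (-1) ^ n * (-1 * (-1) ^ n)) with ((-1) ^ n * (-1) ^ n) by ring. exact IHn. Qed.

Lemma key (p n : nat) (Lam : R) (d : nat -> R -> R) :
  (1 <= p)%nat -> (p <= n)%nat ->
  (forall j x, (j < 2 * n)%nat -> inI x -> D_in (d j) (d (S j)) inI x) ->
  (forall x, inI x -> (-1) ^ n * d (2 * n)%nat x - Lam * (-1) ^ (n - p) * d (2 * n - 2 * p)%nat x = 0) ->
  (forall j, (j <= n)%nat -> d j 1 = 0 /\ d j (-1) = 0) ->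
  forall x, inI x -> d 0%nat x = 0.
Proof.
  intros Hp Hpn HD HO HB.
  set (m := (n - p)%nat).
  set (c0 := / 2 - INR m).
  set (B := fun y => (-1) ^ n * TT d c0 n y - Lam * (-1) ^ m * TT d c0 m y).
  set (B' := fun y => - INR p * (d n y * d n y)).
  assert (HBd : forall x, inI x -> D_in B B' inI x).
  { intros x Hx. unfold B. eapply D_in_ext.
    - apply Dminus; apply Dmult_const; apply TT_deriv.
      + intros; apply HD; auto; lia.
      + apply HD; auto; lia.
      + intros; apply HD; auto; unfold m; lia.
      + apply HD; auto; unfold m; lia.
    - cbv beta. unfold B'. specialize (HO x Hx).
      replace (2 * n - 2 * p)%nat with (2 * m)%nat in HO by (unfold m; lia).
      fold m in HO.
      assert (Hnm : INR n = INR m + INR p).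
      { rewrite <- plus_INR. f_equal. unfold m; lia. }
      unfold c0. rewrite Hnm.
      replace ((-1) ^ n * (d (2 * n)%nat x * gg d (/ 2 - INR m) 0 x -
         (-1) ^ n * (INR m + INR p + (/ 2 - INR m) - / 2) * (d n x * d n x)) -
        Lam * (-1) ^ m * (d (2 * m)%nat x * gg d (/ 2 - INR m) 0 x -
         (-1) ^ m * (INR m + (/ 2 - INR m) - / 2) * (d m x * d m x)))
       with (gg d (/ 2 - INR m) 0 x * ((-1) ^ n * d (2 * n)%nat x - Lam * (-1) ^ m * d (2 * m)%nat x)
             - ((-1) ^ n * (-1) ^ n) * INR p * (d n x * d n x)) by field.
      rewrite HO, sq_m1. ring. }
  assert (I1 : inI 1) by (unfold inI; lra).
  assert (Im1 : inI (-1)) by (unfold inI; lra).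
  assert (HB1 : forall s, s = 1 \/ s = -1 -> B s = 0).
  { intros s Hs. unfold B. rewrite !TT_bd. ring.
    all: intros j Hj; destruct Hs as [->| ->]; apply HB; unfold m in *; lia. }
  assert (Hneg : forall c, inI c -> B' c <= 0).
  { intros c _. unfold B'. pose proof (pos_INR p). nra. }
  assert (HB0 : forall y, inI y -> B y = 0).
  { intros y Hy. pose proof (mono B B' HBd Hneg y 1 Hy I1).
    pose proof (mono B B' HBd Hneg (-1) y Im1 Hy).
    rewrite (HB1 1) in H by auto. rewrite (HB1 (-1)) in H0 by auto.
    unfold inI in Hy. specialize (H ltac:(lra)). specialize (H0 ltac:(lra)). lra. }
  assert (Hdn : forall x, inI x -> d n x = 0).
  { intros x Hx. assert (B' x = 0).
    { apply (Din_zero B B' x Hx); auto. intros y Hy; rewrite !HB0; auto. }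
    unfold B' in H. assert (0 < INR p) by (apply lt_0_INR; lia).
    assert (d n x * d n x = 0) by nra. nra. }
  assert (Hall : forall j, (j <= n)%nat -> forall x, inI x -> d (n - j)%nat x = 0).
  { induction j; intros Hj.
    - rewrite Nat.sub_0_r. exact Hdn.
    - apply zero_deriv with (d := d (n - j)%nat).
      + intros c Hc. replace (n - j)%nat with (S (n - S j)) by lia. apply HD; auto; lia.
      + apply IHj; lia.
      + apply HB; lia. }
  intros x Hx. replace 0%nat with (n - n)%nat by lia. apply Hall; auto.
Qed.

Lemma deriv_refl f f' c : deriv_on_I f f' ->
  deriv_on_I (fun x => c * f (- x)) (fun x => - c * f' (- x)).
Proof.
  intros H x Hx eps He.
  assert (Hx' : inI (- x)) by (unfold inI in *; lra).
  assert (Hc : 0 < Rabs c + 1) by (pose proof (Rabs_pos c); lra).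
  set (e := eps / (Rabs c + 1)).
  assert (He' : 0 < e) by (unfold e; apply Rdiv_lt_0_compat; lra).
  assert (Heq : eps = e * (Rabs c + 1)) by (unfold e; field; lra).
  destruct (H (- x) Hx' e He') as [del [Hd Hh]]. exists del. split; auto.
  intros h h0 hlt hI. specialize (Hh (- h)).
  replace (- (x + h)) with (- x + - h) by ring.
  replace ((c * f (- x + - h) - c * f (- x)) / h - - c * f' (- x))
    with (- c * ((f (- x + - h) - f (- x)) / (- h) - f' (- x))) by (field; auto).
  rewrite Rabs_mult, Rabs_Ropp.
  assert (Rabs ((f (- x + - h) - f (- x)) / - h - f' (- x)) < e).
  { apply Hh; [lra| rewrite Rabs_Ropp; auto| unfold inI in *; lra]. }
  pose proof (Rabs_pos c). pose proof (Rabs_pos ((f (- x + - h) - f (- x)) / - h - f' (- x))). nra.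
Qed.

Lemma deriv_unique f g f1 g1 x : (forall y, inI y -> f y = g y) ->
  deriv_on_I f f1 -> deriv_on_I g g1 -> inI x -> f1 x = g1 x.
Proof.
  intros Hfg Hf Hg Hx.
  assert (Z : f1 x - g1 x = 0).
  { apply small_zero. intros eps He.
    destruct (Hf x Hx (eps/2) ltac:(lra)) as [d1 [Hd1 H1]].
    destruct (Hg x Hx (eps/2) ltac:(lra)) as [d2 [Hd2 H2]].
    set (t := Rmin (Rmin d1 d2) 1 / 2).
    assert (Hm : 0 < Rmin (Rmin d1 d2) 1) by (apply Rmin_pos; [apply Rmin_pos|]; lra).
    pose proof (Rmin_l (Rmin d1 d2) 1). pose proof (Rmin_r (Rmin d1 d2) 1).
    pose proof (Rmin_l d1 d2). pose proof (Rmin_r d1 d2).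
    set (h := if Rle_dec x 0 then t else - t).
    assert (Hh : h <> 0 /\ Rabs h < d1 /\ Rabs h < d2 /\ inI (x + h)).
    { unfold h, t, inI in *; destruct (Rle_dec x 0).
      - rewrite Rabs_right; lra.
      - rewrite Rabs_Ropp, Rabs_right; lra. }
    destruct Hh as [Ha [Hb [Hc Hd]]].
    specialize (H1 h Ha Hb Hd). specialize (H2 h Ha Hc Hd).
    rewrite <- (Hfg (x + h) Hd), <- (Hfg x Hx) in H2.
    apply Rabs_def2 in H1. apply Rabs_def2 in H2. apply Rabs_def1; lra. }
  lra.
Qed.

Lemma even_chain m z d : (forall x, inI x -> z (- x) = z x) -> derivs_on_I m z d ->
  forall j, (j <= m)%nat -> forall x, inI x -> d j (- x) = (-1) ^ j * d j x.
Proof.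
  intros Hev [D0 [Dd _]]. induction j; intros Hj x Hx.
  - assert (inI (- x)) by (unfold inI in *; lra).
    rewrite !D0, Hev by auto. simpl; ring.
  - assert (Heq : d (S j) x = - (-1) ^ j * d (S j) (- x)).
    { apply (deriv_unique (d j) (fun y => (-1) ^ j * d j (- y)) (d (S j)) (fun y => - (-1) ^ j * d (S j) (- y)) x).
      - intros y Hy. rewrite IHj by (auto; lia).
        replace ((-1) ^ j * ((-1) ^ j * d j y)) with (((-1) ^ j * (-1) ^ j) * d j y) by ring.
        rewrite sq_m1; ring.
      - apply Dd; lia.
      - apply deriv_refl. apply Dd; lia.
      - exact Hx. }
    rewrite Heq. simpl pow.
    replace (-1 * (-1) ^ j * (- (-1) ^ j * d (S j) (- x))) with (((-1) ^ j * (-1) ^ j) * d (S j) (- x)) by ring.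
    rewrite sq_m1; ring.
Qed.

Theorem mainTheorem7 (p n : nat) (Lam : R) (z1 z2 : R -> R) :
  (1 <= p)%nat -> (p <= n)%nat ->
  even_eigen_sol p n Lam z1 -> even_eigen_sol p n Lam z2 ->
  exists a b : R, (a <> 0 \/ b <> 0) /\
    forall x, inI x -> a * z1 x + b * z2 x = 0.
Proof.
  intros Hp Hpn [E1 [d1 [C1 [O1 B1]]]] [E2 [d2 [C2 [O2 B2]]]].
  pose proof (even_chain _ _ _ E1 C1) as V1. pose proof (even_chain _ _ _ E2 C2) as V2.
  destruct C1 as [D10 [D1d _]]. destruct C2 as [D20 [D2d _]].
  assert (I1 : inI 1) by (unfold inI; lra).
  assert (comb : forall a b, a * d1 n 1 + b * d2 n 1 = 0 ->
            forall x, inI x -> a * z1 x + b * z2 x = 0).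
  { intros a b Hab x Hx. rewrite <- D10, <- D20 by auto.
    apply (key p n Lam (fun j y => a * d1 j y + b * d2 j y)); auto.
    - intros j y Hj Hy. apply Dadd; apply Dmult_const; apply deriv_to_Din; auto.
    - intros y Hy. cbv beta.
      replace ((-1) ^ n * (a * d1 (2 * n)%nat y + b * d2 (2 * n)%nat y) -
        Lam * (-1) ^ (n - p) * (a * d1 (2 * n - 2 * p)%nat y + b * d2 (2 * n - 2 * p)%nat y))
      with (a * ((-1) ^ n * d1 (2 * n)%nat y - Lam * (-1) ^ (n - p) * d1 (2 * n - 2 * p)%nat y)
          + b * ((-1) ^ n * d2 (2 * n)%nat y - Lam * (-1) ^ (n - p) * d2 (2 * n - 2 * p)%nat y)) by ring.
      rewrite O1, O2 by auto. ring.
    - intros j Hj. destruct (Nat.eq_dec j n) as [->|Hne].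
      + split; auto.
        assert (W1 : d1 n (-1) = (-1) ^ n * d1 n 1).
        { rewrite <- V1 by (auto; lia). f_equal; ring. }
        assert (W2 : d2 n (-1) = (-1) ^ n * d2 n 1).
        { rewrite <- V2 by (auto; lia). f_equal; ring. }
        rewrite W1, W2.
        replace (a * ((-1) ^ n * d1 n 1) + b * ((-1) ^ n * d2 n 1))
          with ((-1) ^ n * (a * d1 n 1 + b * d2 n 1)) by ring.
        rewrite Hab; ring.
      + destruct (B1 j ltac:(lia)) as [-> ->]. destruct (B2 j ltac:(lia)) as [-> ->].
        split; ring. }
  destruct (Req_dec (d2 n 1) 0) as [Ha|Ha]; [destruct (Req_dec (d1 n 1) 0) as [Hb|Hb]|].
  - exists 1, 0. split; [left; lra|]. apply comb. rewrite Ha, Hb; ring.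
  - exists (d2 n 1), (- d1 n 1). split; [right; intro; apply Hb; lra|]. apply comb. ring.
  - exists (d2 n 1), (- d1 n 1). split; [left; auto|]. apply comb. ring.
Qed.
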